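(* Assume that $\bar r^j \in \mathrm{recc}(C)$ for every $j \in N_0$. Then every $x \in P^B \setminus C$ satisfies at least one of the two inequalities $$\sum_{j \in N} \frac{x_j}{\alpha_j} \le 1 \qquad\text{or}\qquad \sum_{j \in N} \frac{x_j}{\beta_j} \ge 1 .$$
   Context: Let $A\in\mathbb{R}^{m\times n}$ have full row rank, $b\in\mathbb{R}^m$, and $P=\{x\in\mathbb{R}^n_+ : Ax=b\}$. Let $C\subseteq\mathbb{R}^n$ be an open convex set. Fix a basis $B\subseteq\{1,\dots,n\}$ of $P$ with nonbasic index set $N=\{1,\dots,n\}\setminus B$. Write $P=\{x\in\mathbb{R}^n : x_i=\bar b_i-\sum_{j\in N}\bar a_{ij}x_j\ (i\in B),\ x_j\ge 0\ (j=1,\dots,n)\}$ for some $\bar a\in\mathbb{R}^{|B|\times|N|}$ and $\bar b\in\mathbb{R}^{|B|}_+$. The basic solution $\bar x$ is given by $\bar x_i=\bar b_i$ for $i\in B$ and $\bar x_i=0$ for $i\in N$. The set $P^B\supseteq P$ is obtained from this description by dropping the constraints $x_i\ge0$ for $i\in B$. For $j\in N$ let $\bar r^j\in\mathbb{R}^n$ be given by $\bar r^j_k=-\bar a_{kj}$ for $k\in B$, $\bar r^j_j=1$, and $\bar r^j_k=0$ for $k\in N\setminus\{j\}$. Then $P^B=\{\bar x+\sum_{j\in N}x_j\bar r^j : x_j\ge 0\ \forall j\in N\}$. For $x\in P^B$, the coordinates $x_j$ ($j\in N$) are exactly the coefficients in this representation. It is assumed that $\bar x\notin\mathrm{cl}(C)$.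 For $j\in N$ let $\alpha_j=\inf\{\lambda\ge0:\bar x+\lambda\bar r^j\in C\}$ and $\beta_j=\sup\{\lambda\ge0:\bar x+\lambda\bar r^j\in C\}$. By convention, $\alpha_j=+\infty$ and $\beta_j=-\infty$ if the halfline $\{\bar x+\lambda\bar r^j:\lambda\ge0\}$ does not intersect $C$. The set $N$ is partitioned into - $N_0=\{j\in N:\alpha_j=+\infty,\ \beta_j=-\infty\}$, - $N_1=\{j\in N:\alpha_j\in(0,+\infty),\ \beta_j=+\infty\}$, - $N_2=\{j\in N:\alpha_j\in(0,+\infty),\ \beta_j\in(\alpha_j,+\infty)\}$. We use the convention $t/\pm\infty=0$. For a set $K\subseteq\mathbb{R}^n$, $\mathrm{recc}(K)=\{d\in\mathbb{R}^n: x+\lambda d\in K\ \forall x\in K,\ \forall\lambda\ge0\}$ denotes its recession cone. *)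

(* Defs.v *)
From HB Require Import structures.
From mathcomp Require Import all_boot all_order all_algebra.
From mathcomp Require Import all_classical all_reals all_analysis.
Set Implicit Arguments. Unset Strict Implicit. Unset Printing Implicit Defensive.
Import Order.TTheory GRing.Theory Num.Theory.
Import numFieldNormedType.Exports.
Local Open Scope classical_set_scope.
Local Open Scope ring_scope.

Definition recc (R : realType) (n : nat) (K : set 'rV[R]_n) : set 'rV[R]_n :=
  [set d | forall x, K x -> forall lam : R, 0 <= lam -> K (x + lam *: d)].

Definition alpha_of (R : realType) (n : nat) (C : set 'rV[R]_n) (xb r : 'rV[R]_n)
  : \bar R :=
  ereal_inf [set (lam%:E) | lam in [set lam : R | 0 <= lam /\ C (xb + lam *: r)]].

Definition beta_of (R : realType) (n : nat) (C : set 'rV[R]_n) (xb r : 'rV[R]_n)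
  : \bar R :=
  ereal_sup [set (lam%:E) | lam in [set lam : R | 0 <= lam /\ C (xb + lam *: r)]].

(* t / a with the convention t / (+-oo) = 0. *)
Definition divE (R : realType) (t : R) (a : \bar R) : R :=
  match a with
  | EFin r => t / r
  | _ => 0
  end.

Definition basic_sol (R : realType) (n : nat) (B : {set 'I_n}) (bb : 'I_n -> R)
  : 'rV[R]_n := \row_k (if k \in B then bb k else 0).

Definition ray (R : realType) (n : nat) (B : {set 'I_n}) (ab : 'I_n -> 'I_n -> R)
  (j : 'I_n) : 'rV[R]_n :=
  \row_k (if k \in B then - ab k j else if k == j then 1 else 0).

Definition tableau_set (R : realType) (n : nat) (B : {set 'I_n})
  (ab : 'I_n -> 'I_n -> R) (bb : 'I_n -> R) : set 'rV[R]_n :=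
  [set x | (forall i, i \in B -> x 0 i = bb i - \sum_(j in ~: B) ab i j * x 0 j)
           /\ (forall k, 0 <= x 0 k)].

(* P^B: drop the constraints x_i >= 0 for i in B. *)
Definition PB (R : realType) (n : nat) (B : {set 'I_n})
  (ab : 'I_n -> 'I_n -> R) (bb : 'I_n -> R) : set 'rV[R]_n :=
  [set x | (forall i, i \in B -> x 0 i = bb i - \sum_(j in ~: B) ab i j * x 0 j)
           /\ (forall j, j \in ~: B -> 0 <= x 0 j)].

(* Main.v *)
Require Import Defs.
From HB Require Import structures.
From mathcomp Require Import all_boot all_order all_algebra.
From mathcomp Require Import all_classical all_reals all_analysis.
From mathcomp Require Import ring lra.
Import Order.TTheory GRing.Theory Num.Theory.
Import numFieldNormedType.Exports.
Local Open Scope classical_set_scope.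
Local Open Scope ring_scope.

Lemma conv2 (R : realType) (n : nat) (C : set 'rV[R]_n)
  (hC : convex_set (C : set (convex_lmodType 'rV[R]_n))) (x y : 'rV[R]_n) (t : R) :
  0 <= t -> t <= 1 -> C x -> C y -> C (t *: x + (1 - t) *: y).
Proof.
move=> t0 t1 Cx Cy.
have := hC x y (Itv01 t0 t1); rewrite !inE => /(_ Cx Cy).
by [].
Qed.

Lemma conv_comb_seq (R : realType) (n : nat) (C : set 'rV[R]_n)
  (hC : convex_set (C : set (convex_lmodType 'rV[R]_n))) (I : eqType) (P : pred I)
  (p : I -> 'rV[R]_n) (s : seq I) : forall (mu : I -> R),
  (forall i, P i -> 0 <= mu i) -> \sum_(i <- s | P i) mu i = 1 ->
  (forall i, P i -> 0 < mu i -> C (p i)) -> C (\sum_(i <- s | P i) mu i *: p i).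
Proof.
elim: s => [|i s IH] mu mu0.
  by rewrite big_nil => /eqP; rewrite eq_sym oner_eq0.
rewrite !big_cons; case: ifP => Pi; last exact: IH.
set c := \sum_(j <- s | P j) mu j => hsum hC'.
have c0 : 0 <= c by apply: sumr_ge0.
have [ce|cne] := eqVneq c 0.
  have := ce; move/eqP; rewrite psumr_eq0 // => /allP hall.
  rewrite big1_seq; last first.
    move=> j /andP [Pj js]; have /implyP/(_ Pj)/eqP -> := hall j js.
    by rewrite scale0r.
  have mi1 : mu i = 1 by rewrite -hsum ce addr0.
  by rewrite addr0 mi1 scale1r; apply: hC' => //; rewrite mi1.
have cpos : 0 < c by rewrite lt_neqAle eq_sym cne c0.
have hq : C (\sum_(j <- s | P j) (mu j / c) *: p j).
  apply: IH.
  - by move=> j Pj; rewrite divr_ge0 // mu0.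
  - by rewrite -mulr_suml -/c divff.
  - move=> j Pj; rewrite pmulr_lgt0 ?invr_gt0 // => h; exact: hC'.
have E : \sum_(j <- s | P j) (mu j / c) *: p j
    = c^-1 *: \sum_(j <- s | P j) mu j *: p j.
  rewrite scaler_sumr; apply: eq_bigr => j _.
  by rewrite scalerA mulrC.
rewrite E in hq.
have tc : 1 - mu i = c by rewrite -hsum addrC addKr.
have [mi0|mine] := eqVneq (mu i) 0.
  have c1 : c = 1 by rewrite -tc mi0 subr0.
  by rewrite mi0 scale0r add0r; move: hq; rewrite c1 invr1 scale1r.
have mipos : 0 < mu i by rewrite lt_neqAle eq_sym mine mu0.
have mi1 : mu i <= 1 by rewrite -subr_ge0 tc.
have := @conv2 _ _ _ hC _ _ _ (ltW mipos) mi1 (hC' i Pi mipos) hq.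
by rewrite tc scalerA divff // scale1r.
Qed.
Section Ray.
Variables (R : realType) (n : nat) (C : set 'rV[R]_n) (xb r : 'rV[R]_n).
Hypothesis hconv : convex_set (C : set (convex_lmodType 'rV[R]_n)).
Hypothesis hxb : ~ closure C xb.

Let L := [set lam : R | 0 <= lam /\ C (xb + lam *: r)].

Lemma ray_closure_pos : ~ (forall e : R, 0 < e -> exists2 l, L l & l < e).
Proof.
move=> H; apply: hxb => B /nbhs_ballP [e /= e0 eB].
have ne : 0 < `|r| + 1 by rewrite ltr_wpDl.
have [l [l0 Cl] le] := H (e / (`|r| + 1)) (divr_gt0 e0 ne).
exists (xb + l *: r); split => //; apply: eB.
rewrite -ball_normE /= opprD addrA subrr sub0r normrN normrZ ger0_norm //.
apply: (le_lt_trans _ (_ : l * (`|r| + 1) < e)).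
  by rewrite ler_wpM2l // lerDl.
by rewrite -ltr_pdivlMr.
Qed.

Lemma ray_interval {l1 l2 lam} : L l1 -> L l2 -> l1 <= lam -> lam <= l2 -> L lam.
Proof.
move=> [h1 C1] [h2 C2] le1 le2; split; first exact: le_trans le1.
have [e12|ne] := eqVneq l1 l2.
  by have -> : lam = l1 by apply/eqP; rewrite eq_le le1 e12 le2.
have d0 : 0 < l2 - l1 by rewrite subr_gt0 lt_neqAle ne (le_trans le1 le2).
pose t := (l2 - lam) / (l2 - l1).
have t0 : 0 <= t by rewrite divr_ge0 ?subr_ge0 ?(le_trans le1 le2).
have t1 : t <= 1 by rewrite ler_pdivrMr // mul1r lerD2l lerN2.
have := @conv2 _ _ _ hconv _ _ _ t0 t1 C1 C2.
have -> : t *: (xb + l1 *: r) + (1 - t) *: (xb + l2 *: r)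
   = xb + (t * l1 + (1 - t) * l2) *: r.
  rewrite !scalerDr !scalerA addrACA -scalerDl [t + _]addrC subrK scale1r -scalerDl.
  by [].
suff -> : t * l1 + (1 - t) * l2 = lam by [].
rewrite /t; field; exact: lt0r_neq0.
Qed.

Let S := [set (lam%:E) | lam in L].

Lemma ray_empty : ~ (exists l, L l) ->
  alpha_of C xb r = +oo%E /\ beta_of C xb r = -oo%E.
Proof.
move=> H; have E : S = set0.
  by apply/seteqP; split => // y [l Ll _]; apply: H; exists l.
change (ereal_inf S = +oo%E /\ ereal_sup S = -oo%E).
by rewrite E ereal_inf0 ereal_sup0.
Qed.

Lemma ray_alpha {l0} : L l0 -> exists a, alpha_of C xb r = a%:E /\ 0 < a /\
  (forall l, L l -> a <= l) /\ (forall lam, a < lam -> exists2 l, L l & l < lam).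
Proof.
move=> Ll0; change (exists a, ereal_inf S = a%:E /\ 0 < a /\
  (forall l, L l -> a <= l) /\ (forall lam, a < lam -> exists2 l, L l & l < lam)).
have lb l : L l -> (ereal_inf S <= l%:E)%E by move=> Ll; apply: ereal_inf_lbound; exists l.
have ge0 : (0 <= ereal_inf S)%E.
  by apply: le_ereal_inf_tmp => y [l [l0' _] <-]; rewrite lee_fin.
have apx lam : (ereal_inf S < lam%:E)%E -> exists2 l, L l & l < lam.
  by move=> /ereal_inf_lt [y [l Ll <-]]; rewrite lte_fin => h; exists l.
case E: (ereal_inf S) lb ge0 apx => [a| |] lb ge0 apx.
- exists a; split => //; split; last split.
  + rewrite lt_neqAle -lee_fin ge0 andbT; apply/eqP => a0; apply: ray_closure_pos.
    by move=> e e0; apply: apx; rewrite -a0 lte_fin.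
  + by move=> l /lb; rewrite lee_fin.
  + by move=> lam; rewrite -lte_fin; apply: apx.
- by have := lb _ Ll0.
- by [].
Qed.

Lemma ray_beta {l0} : L l0 ->
  (beta_of C xb r = +oo%E /\ forall lam, exists2 l, L l & lam < l) \/
  exists b, beta_of C xb r = b%:E /\ (forall l, L l -> l <= b) /\
    (forall lam, lam < b -> exists2 l, L l & lam < l).
Proof.
move=> Ll0; change ((ereal_sup S = +oo%E /\ forall lam, exists2 l, L l & lam < l) \/
  exists b, ereal_sup S = b%:E /\ (forall l, L l -> l <= b) /\
    (forall lam, lam < b -> exists2 l, L l & lam < l)).
have ub l : L l -> (l%:E <= ereal_sup S)%E by move=> Ll; apply: ereal_sup_ubound; exists l.
have apx lam : (lam%:E < ereal_sup S)%E -> exists2 l, L l & lam < l.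
  by move=> /ereal_sup_gt [y [l Ll <-]]; rewrite lte_fin => h; exists l.
case E: (ereal_sup S) ub apx => [b| |] ub apx.
- right; exists b; split; first by []. split; first by move=> l /ub; rewrite lee_fin.
  by move=> lam; rewrite -lte_fin; apply: apx.
- left; split => // lam; apply: apx; by rewrite ltry.
- by have := ub _ Ll0.
Qed.

Lemma inv_bounds {a v : R} : 0 < a -> 0 < v -> v < a^-1 -> a < v^-1.
Proof. by move=> a0 v0 h; rewrite -[a]invrK ltf_pV2 ?posrE ?invr_gt0. Qed.

Lemma inv_bounds2 {b v : R} : 0 < b -> 0 < v -> b^-1 < v -> v^-1 < b.
Proof. by move=> b0 v0 h; rewrite -[b]invrK ltf_pV2 ?posrE ?invr_gt0. Qed.

Lemma ray_mem {l0} (s : R) : L l0 -> 0 < s -> s < 1 ->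
  L (((1 - s) * divE 1 (alpha_of C xb r) + s * divE 1 (beta_of C xb r))^-1).
Proof.
move=> Ll0 s0 s1.
have [a [-> [a0 [alb aapx]]]] := ray_alpha Ll0.
rewrite /divE div1r.
have s1' : 0 < 1 - s by rewrite subr_gt0.
have ia0 : 0 < a^-1 by rewrite invr_gt0.
case: (ray_beta Ll0) => [[-> bapx] | [b [-> [bub bapx]]]].
- rewrite mulr0 addr0.
  set v := (1 - s) * a^-1.
  have v0 : 0 < v by rewrite mulr_gt0.
  have va : v < a^-1 by rewrite /v -[X in _ < X]mul1r ltr_pM2r //; lra.
  have [l1 Ll1 lt1] := aapx _ (inv_bounds a0 v0 va).
  have [l2 Ll2 lt2] := bapx (v^-1).
  exact: ray_interval Ll1 Ll2 (ltW lt1) (ltW lt2).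
- rewrite div1r.
  have ab : a <= b by rewrite (le_trans (alb _ Ll0) (bub _ Ll0)).
  have [eab|nab] := eqVneq a b.
    subst b; rewrite -mulrDl subrK mul1r invrK.
    by have -> : a = l0 by apply/eqP; rewrite eq_le alb // bub.
  have ab' : a < b by rewrite lt_neqAle nab.
  have b0 : 0 < b by rewrite (lt_trans a0).
  have iab : b^-1 < a^-1 by rewrite ltf_pV2 ?posrE.
  set v := (1 - s) * a^-1 + s * b^-1.
  have v0 : 0 < v by rewrite /v addr_gt0 // mulr_gt0 // invr_gt0.
  have va : v < a^-1.
    have : s * b^-1 < s * a^-1 by rewrite ltr_pM2l.
    rewrite /v; lra.
  have vb : b^-1 < v.
    have : (1 - s) * b^-1 < (1 - s) * a^-1 by rewrite ltr_pM2l.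
    rewrite /v; lra.
  have [l1 Ll1 lt1] := aapx _ (inv_bounds a0 v0 va).
  have [l2 Ll2 lt2] := bapx _ (inv_bounds2 b0 v0 vb).
  exact: ray_interval Ll1 Ll2 (ltW lt1) (ltW lt2).
Qed.

Lemma ray_uw {l0} : L l0 ->
  0 < divE 1 (alpha_of C xb r) /\ 0 <= divE 1 (beta_of C xb r).
Proof.
move=> Ll0; have [a [-> [a0 [alb _]]]] := ray_alpha Ll0.
split; first by rewrite /= div1r invr_gt0.
case: (ray_beta Ll0) => [[-> _] | [b [-> [bub _]]]] //=.
by rewrite div1r invr_ge0 (le_trans (ltW a0)) // (le_trans (alb _ Ll0)) // bub.
Qed.
End Ray.

Lemma divE_mul (R : realType) (t : R) (a : \bar R) : divE t a = t * divE 1 a.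
Proof. by case: a => [a| |] /=; rewrite ?mulr0 // mulrA mulr1. Qed.

Lemma PB_decomp (R : realType) (n : nat) (B : {set 'I_n})
  (ab : 'I_n -> 'I_n -> R) (bb : 'I_n -> R) (x : 'rV[R]_n) :
  PB B ab bb x ->
  x = basic_sol B bb + \sum_(j in ~: B) x 0 j *: ray B ab j.
Proof.
move=> [hB _]; apply/rowP => k; rewrite !mxE summxE.
under eq_bigr => j _ do rewrite !mxE.
case: ifP => kB.
  rewrite hB // -sumrN; congr (_ + _); apply: eq_bigr => j _.
  by rewrite mulrN mulrC.
rewrite add0r (bigD1 k) /=; last by rewrite inE kB.
rewrite eqxx mulr1 big1 ?addr0 // => j /andP [_ jk].
by rewrite eq_sym (negbTE jk) mulr0.
Qed.
Theorem theorem1 (R : realType) (m n : nat)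
  (A : 'M[R]_(m, n)) (b : 'cV[R]_m)
  (hA : \rank A = m)
  (B : {set 'I_n})
  (hBcard : #|B| = m)
  (hBbasis : forall y : 'cV[R]_n,
      A *m y = 0 -> (forall k, k \notin B -> y k 0 = 0) -> y = 0)
  (ab : 'I_n -> 'I_n -> R) (bb : 'I_n -> R)
  (hbb : forall i, i \in B -> 0 <= bb i)
  (hP : forall x : 'rV[R]_n,
      ((forall k, 0 <= x 0 k) /\ A *m x^T = b) <-> tableau_set B ab bb x)
  (C : set 'rV[R]_n)
  (hCopen : open C)
  (hCconv : convex_set (C : set (convex_lmodType 'rV[R]_n)))
  (hxb : ~ closure C (basic_sol B bb))
  (hN0 : forall j, j \in ~: B ->
      alpha_of C (basic_sol B bb) (ray B ab j) = +oo%E ->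
      beta_of C (basic_sol B bb) (ray B ab j) = -oo%E ->
      recc C (ray B ab j)) :
  forall x : 'rV[R]_n, PB B ab bb x -> ~ C x ->
    \sum_(j in ~: B) divE (x 0 j) (alpha_of C (basic_sol B bb) (ray B ab j)) <= 1
    \/ 1 <= \sum_(j in ~: B) divE (x 0 j) (beta_of C (basic_sol B bb) (ray B ab j)).
Proof.
Proof.
move=> x hx nCx.
have hdec := @PB_decomp _ _ _ _ _ _ hx.
case: hx => _ hxN.
set xb := basic_sol B bb in hdec hxb hN0 *.
set rj := ray B ab in hdec hN0 *.
pose u j := divE 1 (alpha_of C xb (rj j)).
pose w j := divE 1 (beta_of C xb (rj j)).
under eq_bigr => j _ do rewrite divE_mul -/(u j).
under [X in _ \/ _ <= X]eq_bigr => j _ do rewrite divE_mul -/(w j).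
set S := \sum_(j in _) _ * u j.
set T := \sum_(j in _) _ * w j.
have [S1|S1] := lerP S 1; first by left.
have [T1|T1] := lerP 1 T; first by right.
exfalso; apply: nCx.
pose Lj j := [set lam : R | 0 <= lam /\ C (xb + lam *: rj j)].
have huw j : j \in ~: B -> 0 <= u j /\ 0 <= w j /\
   ((exists l, Lj j l) -> 0 < u j) /\
   (~ (exists l, Lj j l) -> u j = 0 /\ w j = 0).
  move=> jN; have [[l0 Ll0]|ne] := pselect (exists l, Lj j l).
    have [h1 h2] := @ray_uw _ _ C xb (rj j) hxb _ Ll0.
    by split; [exact: ltW|split => //; split => // h; exfalso; apply: h; exists l0].
  have [h1 h2] := @ray_empty _ _ C xb (rj j) ne.
  by rewrite /u /w h1 h2 /=; split => //; split => //; split => // h; exfalso; apply: ne.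
pose s := (S - 1) / (S - T).
have ST : 0 < S - T by lra.
have s0 : 0 < s by rewrite divr_gt0 // subr_gt0.
have s1 : s < 1 by rewrite ltr_pdivrMr // mul1r; lra.
pose v j := (1 - s) * u j + s * w j.
have v0 j : j \in ~: B -> 0 <= v j.
  move=> jN; have [u0 [w0 _]] := huw j jN.
  by rewrite /v addr_ge0 // mulr_ge0 // ?subr_ge0 ?ltW.
have vpos j : j \in ~: B -> (exists l, Lj j l) -> 0 < v j.
  move=> jN ne; have [u0 [w0 [up _]]] := huw j jN.
  have upos := up ne.
  have h1 : 0 < (1 - s) * u j by rewrite mulr_gt0 // subr_gt0.
  have h2 : 0 <= s * w j by rewrite mulr_ge0 // ltW.
  rewrite /v; lra.
pose mu j := x 0 j * v j.
pose pj j := xb + (v j)^-1 *: rj j.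
have hmu : \sum_(j in ~: B) mu j = 1.
  rewrite (eq_bigr (fun j => (1 - s) * (x 0 j * u j) + s * (x 0 j * w j))); last first.
    by move=> j _; rewrite /mu /v; ring.
  rewrite big_split /= -!mulr_sumr -/S -/T /s; field.
  by rewrite subr_eq0; apply/eqP => e; move: ST; rewrite e subrr ltxx.
have Cy : C (\sum_(j in ~: B) mu j *: pj j).
  apply: (@conv_comb_seq _ _ C hCconv) => //.
  - by move=> j jN; rewrite /mu mulr_ge0 // ?hxN // v0.
  - move=> j jN mupos.
    have [ne|ne] := pselect (exists l, Lj j l).
      have [l0 Ll0] := ne.
      exact: (proj2 (@ray_mem _ _ C xb (rj j) hCconv hxb _ s Ll0 s0 s1)).
    have [_ [_ [_ h]]] := huw j jN; have [hu hw] := h ne.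
    by move: mupos; rewrite /mu /v hu hw !mulr0 addr0 mulr0 ltxx.
have Ey : \sum_(j in ~: B) mu j *: pj j
    = xb + \sum_(j in ~: B) (x 0 j * (v j * (v j)^-1)) *: rj j.
  rewrite /pj (eq_bigr (fun j => mu j *: xb + (x 0 j * (v j * (v j)^-1)) *: rj j)).
    by rewrite big_split /= -scaler_suml hmu scale1r.
  by move=> j _; rewrite scalerDr scalerA /mu mulrA.
rewrite Ey in Cy.
have -> : x = (xb + \sum_(j in ~: B) (x 0 j * (v j * (v j)^-1)) *: rj j)
     + \sum_(j in ~: B) (x 0 j * (1 - v j * (v j)^-1)) *: rj j.
  rewrite -addrA -big_split /= [LHS]hdec; congr (_ + _); apply: eq_bigr => j _.
  by rewrite -scalerDl -mulrDr addrC subrK mulr1.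
set y := xb + _ in Cy *.
apply: (big_rec (fun z => C (y + z))); first by rewrite addr0.
move=> j z jN Cz.
have [vz|vnz] := eqVneq (v j) 0.
  rewrite vz mul0r subr0 mulr1 addrCA addrC.
  have ne : ~ (exists l, Lj j l).
    by move=> h; have := vpos j jN h; rewrite vz ltxx.
  have [h1 h2] := @ray_empty _ _ C xb (rj j) ne.
  exact: (hN0 j jN h1 h2 (y + z) Cz (x 0 j) (hxN j jN)).
by rewrite divff // subrr mulr0 scale0r add0r.
Qed.
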